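(* Every pair-symmetric grid-labelled graph (with at least one edge) is separable.
   Context: A grid-labelled graph of type $(a,b)$ is a simple graph $G$ whose vertex set is the grid $[a]\times[b]$. If $G$ has $m\ge1$ edges, $\rho(G)=L(G)/(2m)$, where $L(G)$ is the combinatorial Laplacian, viewed as a density matrix on $\mathbb{C}^a\otimes\mathbb{C}^b$ with vertex $(i,j)$ corresponding to $|i\rangle\otimes|j\rangle$; $G$ is separable if $\rho(G)$ is a convex combination of tensor products of density matrices. An edge $\{(i,j),(k,l)\}$ is diagonal if $i\neq k$ and $j\neq l$. $G$ is pair-symmetric if for each diagonal edge $\{(i,j),(k,l)\}\in E(G)$, the edge $\{(k,j),(i,l)\}$ also belongs to $E(G)$. *)

(* Defs.v *)
From HB Require Import structures.
From mathcomp Require Import all_boot all_order all_algebra.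
Set Implicit Arguments. Unset Strict Implicit. Unset Printing Implicit Defensive.
Import Order.TTheory GRing.Theory Num.Theory.
Local Open Scope ring_scope.

Section Grid.
Variables (C : numClosedFieldType) (a b : nat).

Definition vtx := ('I_a * 'I_b)%type.

(* vertex (i,j) <-> basis vector |i> (x) |j>, i.e. index i*b+j of C^(a*b) *)
Definition vidx (x : vtx) : 'I_(a * b) := mxvec_index x.1 x.2.

Definition grid_mx (f : vtx -> vtx -> C) : 'M[C]_(a * b) :=
  \matrix_(p, q) \sum_(x | vidx x == p) \sum_(y | vidx y == q) f x y.

Definition kron (A : 'M[C]_a) (B : 'M[C]_b) : 'M[C]_(a * b) :=
  grid_mx (fun x y => A x.1 y.1 * B x.2 y.2).

Definition simple_graph (e : rel vtx) : Prop :=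
  (forall x y, e x y = e y x) /\ (forall x, e x x = false).

Definition two_m (e : rel vtx) : nat := #|[set p : vtx * vtx | e p.1 p.2]|.

Definition degree (e : rel vtx) (x : vtx) : nat := #|[set y | e x y]|.

Definition laplacian (e : rel vtx) : 'M[C]_(a * b) :=
  grid_mx (fun x y => if x == y then (degree e x)%:R
                      else if e x y then -1 else 0).

Definition rho (e : rel vtx) : 'M[C]_(a * b) :=
  ((two_m e)%:R)^-1 *: laplacian e.

Definition pair_symmetric (e : rel vtx) : Prop :=
  forall i j k l, (i != k) -> (j != l) -> e (i, j) (k, l) -> e (k, j) (i, l).

End Grid.

Section Density.
Variables (C : numClosedFieldType).

Definition conjT n (M : 'M[C]_n) : 'M[C]_n := map_mx Num.conj M^T.

Definition psd n (M : 'M[C]_n) : Prop :=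
  conjT M = M /\
  forall v : 'rV[C]_n, 0 <= (v *m M *m map_mx Num.conj v^T) 0 0.

Definition density n (M : 'M[C]_n) : Prop := psd M /\ \tr M = 1.

Definition separable a b (rho : 'M[C]_(a * b)) : Prop :=
  exists (N : nat) (w : 'I_N -> C) (A : 'I_N -> 'M[C]_a) (B : 'I_N -> 'M[C]_b),
    [/\ forall t, 0 <= w t,
        \sum_(t < N) w t = 1,
        forall t, density (A t) /\ density (B t)
      & rho = \sum_(t < N) w t *: kron (A t) (B t)].

End Density.

(* Main.v *)
Require Import Defs.
From HB Require Import structures.
From mathcomp Require Import all_boot all_order all_algebra ring.
Import Order.TTheory GRing.Theory Num.Theory.
Local Open Scope ring_scope.

Set Implicit Arguments. Unset Strict Implicit.

Lemma vidx_inj (a b : nat) : injective (@vidx a b).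
Proof.
move=> [i j] [k l]; rewrite /vidx /mxvec_index /= => /(congr1 val) /= H.
by have /enum_rank_inj -> : enum_rank (i, j) = enum_rank (k, l) by apply: val_inj.
Qed.

Lemma grid_ext (C : numClosedFieldType) a b (f g : vtx a b -> vtx a b -> C) :
  (forall x y, f x y = g x y) -> grid_mx f = grid_mx g.
Proof.
move=> H; apply/matrixP => p q; rewrite !mxE.
by apply: eq_bigr => x _; apply: eq_bigr => y _.
Qed.

Lemma grid_mxZ (C : numClosedFieldType) a b (k : C) (f : vtx a b -> vtx a b -> C) :
  k *: grid_mx f = grid_mx (fun x y => k * f x y).
Proof.
apply/matrixP => p q; rewrite !mxE mulr_sumr.
by apply: eq_bigr => x _; rewrite mulr_sumr.
Qed.

Lemma grid_mx_sum (C : numClosedFieldType) a b (T : finType)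
   (F : T -> vtx a b -> vtx a b -> C) :
  \sum_t grid_mx (F t) = grid_mx (fun x y => \sum_t F t x y).
Proof.
apply/matrixP => p q; rewrite summxE !mxE.
under eq_bigr do rewrite mxE.
rewrite exchange_big; apply: eq_bigr => x _.
by rewrite exchange_big.
Qed.

Lemma grid_tr (C : numClosedFieldType) a b (f : vtx a b -> vtx a b -> C) :
  \tr (grid_mx f) = \sum_x f x x.
Proof.
rewrite /mxtrace.
under eq_bigr do rewrite mxE.
rewrite (partition_big (@vidx a b) xpredT) //=.
apply: eq_bigr => p _; apply: eq_bigr => x /eqP <-.
rewrite (big_pred1 x) // => y /=.
by rewrite (inj_eq (@vidx_inj a b)).
Qed.


Definition outer (C : numClosedFieldType) n (v : 'I_n -> C) : 'M[C]_n :=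
  \matrix_(i, j) (v i * (v j)^*).

Lemma tr_outer (C : numClosedFieldType) n (v : 'I_n -> C) :
  \tr (outer v) = \sum_i v i * (v i)^*.
Proof. by rewrite /mxtrace; apply: eq_bigr => i _; rewrite mxE. Qed.

Lemma tr_outer_ge0 (C : numClosedFieldType) n (v : 'I_n -> C) :
  0 <= \tr (outer v).
Proof. by rewrite tr_outer; apply: sumr_ge0 => i _; apply: mul_conjC_ge0. Qed.

Lemma tr_outer_eq0 (C : numClosedFieldType) n (v : 'I_n -> C) :
  \tr (outer v) = 0 -> outer v = 0.
Proof.
rewrite tr_outer => /eqP; rewrite psumr_eq0; last by move=> i _; apply: mul_conjC_ge0.
move=> /allP H.
have v0 : forall i, v i = 0.
  move=> i; have := H i (mem_index_enum i); rewrite /= mul_conjC_eq0.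
  by move/eqP.
by apply/matrixP => i j; rewrite !mxE v0 mul0r.
Qed.

Lemma psd_outer (C : numClosedFieldType) n (s : C) (v : 'I_n -> C) :
  0 <= s -> psd (s *: outer v).
Proof.
move=> s0; split.
  apply/matrixP => i j; rewrite /conjT !mxE; idtac; rewrite !rmorphM /= (geC0_conj s0) conjCK.
  by rewrite (mulrC (v j)^*).
move=> r.
have -> : (r *m (s *: outer v) *m map_mx Num.conj r^T) 0 0 =
   s * ((\sum_i r 0 i * v i) * (\sum_i r 0 i * v i)^*).
  rewrite mxE rmorph_sum /= mulr_sumr mulr_sumr; apply: eq_bigr => j _.
  rewrite mulr_suml mulr_sumr [X in X * _]mxE mulr_suml.
  apply: (@eq_bigr _ _ _ (ordinal n)) => i _; rewrite !mxE rmorphM /=; ring.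
by apply: mulr_ge0 => //; apply: mul_conjC_ge0.
Qed.

Lemma kronZ (C : numClosedFieldType) a b (s t : C) (A : 'M[C]_a) (B : 'M[C]_b) :
  kron (s *: A) (t *: B) = (s * t) *: kron A B.
Proof.
rewrite /kron grid_mxZ; apply: grid_ext => x y; rewrite !mxE; ring.
Qed.

Lemma kron0l (C : numClosedFieldType) a b (B : 'M[C]_b) :
  kron (0 : 'M[C]_a) B = 0.
Proof.
have -> : (0 : 'M[C]_a) = 0 *: 0 by rewrite scale0r.
by rewrite -[B]scale1r kronZ mul0r scale0r.
Qed.

Lemma kron0r (C : numClosedFieldType) a b (A : 'M[C]_a) :
  kron A (0 : 'M[C]_b) = 0.
Proof.
have -> : (0 : 'M[C]_b) = 0 *: 0 by rewrite scale0r.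
by rewrite -[A]scale1r kronZ mulr0 scale0r.
Qed.

Lemma tr_kron (C : numClosedFieldType) a b (A : 'M[C]_a) (B : 'M[C]_b) :
  \tr (kron A B) = \tr A * \tr B.
Proof.
rewrite /kron grid_tr /mxtrace big_distrlr /= pair_bigA /=.
by apply: eq_bigr => [[i j]] _.
Qed.


Lemma density_outer (C : numClosedFieldType) n (v : 'I_n -> C) :
  \tr (outer v) != 0 -> density ((\tr (outer v))^-1 *: outer v).
Proof.
move=> nz; split; last by rewrite mxtraceZ mulVf.
by apply: psd_outer; rewrite invr_ge0 tr_outer_ge0.
Qed.

Lemma density_basis (C : numClosedFieldType) n (i0 : 'I_n) :
  density (outer (fun i => (i == i0)%:R : C)).
Proof.
have tr1 : \tr (outer (fun i => (i == i0)%:R : C)) = 1.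
  rewrite tr_outer (bigD1 i0) //= eqxx conjC_nat mulr1 big1 ?addr0 // => i /negbTE ->.
  by rewrite mul0r.
have := @density_outer C n (fun i => (i == i0)%:R : C).
by rewrite tr1 invr1 scale1r; apply; apply: oner_neq0.
Qed.

Lemma sep_sum (C : numClosedFieldType) a b (T : finType) (c : T -> C)
  (v : T -> 'I_a -> C) (w : T -> 'I_b -> C) (R : 'M[C]_(a * b))
  (i0 : 'I_a) (j0 : 'I_b) :
  (forall t, 0 <= c t) -> \tr R = 1 ->
  R = \sum_t c t *: kron (outer (v t)) (outer (w t)) -> separable R.
Proof.
move=> c0 trR defR.
pose n1 t := \tr (outer (v t)); pose n2 t := \tr (outer (w t)).
pose A t := if n1 t == 0 then outer (fun i => (i == i0)%:R : C)
            else (n1 t)^-1 *: outer (v t).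
pose B t := if n2 t == 0 then outer (fun i => (i == j0)%:R : C)
            else (n2 t)^-1 *: outer (w t).
pose wt t := c t * (n1 t * n2 t).
have eqt : forall t, c t *: kron (outer (v t)) (outer (w t)) = wt t *: kron (A t) (B t).
  move=> t; rewrite /wt /A /B.
  have [/eqP h1|h1] := boolP (n1 t == 0).
    by rewrite tr_outer_eq0 // kron0l h1 mul0r mulr0 !scale0r scaler0.
  have [/eqP h2|h2] := boolP (n2 t == 0).
    by rewrite (tr_outer_eq0 h2) kron0r h2 mulr0 mulr0 !scale0r scaler0.
  rewrite kronZ scalerA; congr (_ *: _); rewrite /n1 /n2; field.
  by rewrite h1 h2.
have sumE : forall F : T -> C, \sum_t F t = \sum_(k < #|T|) F (enum_val k).
  by move=> F; rewrite -big_enum_val.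
have sumM : forall F : T -> 'M[C]_(a * b), \sum_t F t = \sum_(k < #|T|) F (enum_val k).
  by move=> F; rewrite -big_enum_val.
exists #|T|, (fun k => wt (enum_val k)), (fun k => A (enum_val k)),
  (fun k => B (enum_val k)); split.
- move=> k; apply: mulr_ge0 => //; apply: mulr_ge0; exact: tr_outer_ge0.
- rewrite -(sumE wt) -trR defR raddf_sum /=; apply: eq_bigr => t _.
  by rewrite mxtraceZ tr_kron.
- move=> k; rewrite /A /B; split.
    by case: ifP => [_|/negbT h]; [apply: density_basis|apply: density_outer].
  by case: ifP => [_|/negbT h]; [apply: density_basis|apply: density_outer].
- by rewrite defR sumM; apply: eq_bigr => k _; rewrite eqt.
Qed.


Lemma pick_sum (C : numClosedFieldType) (T : finType) (z : T) (F : T -> C) :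
  \sum_x (z == x)%:R * F x = F z.
Proof.
rewrite (bigD1 z) //= eqxx mul1r big1 ?addr0 // => x /negbTE.
by rewrite eq_sym => ->; rewrite mul0r.
Qed.

Lemma deg_sum (C : numClosedFieldType) a b (e : rel (vtx a b)) z :
  (degree e z)%:R = \sum_y (e z y)%:R :> C.
Proof.
rewrite /degree -[in LHS](mulr1n 1) -/(1 *+ _) -sumr_const big_mkcond /=.
by apply: eq_bigr => y _; rewrite inE; case: (e z y).
Qed.

Lemma twom_sum (C : numClosedFieldType) a b (e : rel (vtx a b)) :
  (two_m e)%:R = \sum_p (e p.1 p.2)%:R :> C.
Proof.
rewrite /two_m -[in LHS](mulr1n 1) -/(1 *+ _) -sumr_const big_mkcond /=.
by apply: eq_bigr => y _; rewrite inE; case: (e _ _).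
Qed.

Definition del (C : numClosedFieldType) a b (x z : vtx a b) : C := (z == x)%:R.

Lemma comb (C : numClosedFieldType) a b (e : rel (vtx a b)) z z' :
  simple_graph e ->
  \sum_x \sum_y (e x y)%:R * ((del C x z - del C y z) * (del C x z' - del C y z'))
  = 2 * (if z == z' then (degree e z)%:R else if e z z' then -1 else 0).
Proof.
move=> [esym eirr].
have -> : \sum_x \sum_y (e x y)%:R * ((del C x z - del C y z) * (del C x z' - del C y z'))
  = \sum_x \sum_y (e x y)%:R * del C x z * del C x z'
  - \sum_x \sum_y (e x y)%:R * del C x z * del C y z'
  - \sum_x \sum_y (e x y)%:R * del C y z * del C x z'
  + \sum_x \sum_y (e x y)%:R * del C y z * del C y z'.
  rewrite -sumrB -sumrB -big_split /=; apply: eq_bigr => x _.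
  rewrite -sumrB -sumrB -big_split /=; apply: eq_bigr => y _; ring.
have S1 : \sum_x \sum_y (e x y)%:R * del C x z * del C x z'
    = (z' == z)%:R * \sum_y (e z y)%:R.
  rewrite -(pick_sum z (fun x => (z' == x)%:R * \sum_y (e x y)%:R)).
  apply: eq_bigr => x _; rewrite !mulr_sumr; apply: eq_bigr => y _.
  rewrite /del; ring.
have S2 : \sum_x \sum_y (e x y)%:R * del C x z * del C y z' = (e z z')%:R.
  rewrite -(pick_sum z (fun x => (e x z')%:R)).
  apply: eq_bigr => x _; rewrite -(pick_sum z' (fun y => (e x y)%:R)) mulr_sumr.
  apply: eq_bigr => y _; rewrite /del; ring.
have S3 : \sum_x \sum_y (e x y)%:R * del C y z * del C x z' = (e z' z)%:R.
  rewrite -(pick_sum z' (fun x => (e x z)%:R)).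
  apply: eq_bigr => x _; rewrite -(pick_sum z (fun y => (e x y)%:R)) mulr_sumr.
  apply: eq_bigr => y _; rewrite /del; ring.
have S4 : \sum_x \sum_y (e x y)%:R * del C y z * del C y z'
    = (z' == z)%:R * \sum_y (e z y)%:R.
  rewrite exchange_big /=.
  rewrite -(pick_sum z (fun x => (z' == x)%:R * \sum_y (e x y)%:R)).
  apply: eq_bigr => x _; rewrite !mulr_sumr; apply: eq_bigr => y _.
  rewrite /del esym; ring.
rewrite S1 S2 S3 S4 (esym z' z) -deg_sum (eq_sym z').
case: eqP => [<-|_]; first by rewrite eirr /=; ring.
by case: (e z z') => /=; ring.
Qed.


Definition swp a b (p : vtx a b * vtx a b) : vtx a b * vtx a b :=
  ((p.2.1, p.1.2), (p.1.1, p.2.2)).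

Lemma sigK a b : involutive (@swp a b).
Proof. by move=> [[i j] [k l]]. Qed.

Lemma e_sig1 a b (e : rel (vtx a b)) p :
  simple_graph e -> pair_symmetric e -> e p.1 p.2 -> e (swp p).1 (swp p).2.
Proof.
move=> [esym _] ps; case: p => [[i j] [k l]] /= H.
have [ik|ik] := eqVneq i k; first by subst k.
have [jl|jl] := eqVneq j l; first by subst l; rewrite esym.
exact: ps.
Qed.

Lemma e_sig a b (e : rel (vtx a b)) p :
  simple_graph e -> pair_symmetric e -> e (swp p).1 (swp p).2 = e p.1 p.2.
Proof.
move=> sg ps; apply/idP/idP; last exact: e_sig1.
by move=> /(e_sig1 sg ps); rewrite sigK.
Qed.

Definition sg (C : numClosedFieldType) (s : bool) : C := if s then 1 else -1.

Definition vv (C : numClosedFieldType) a b (t : (vtx a b * vtx a b) * bool) (i : 'I_a) : C :=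
  (i == t.1.1.1)%:R + sg C t.2 * (i == t.1.2.1)%:R.
Definition ww (C : numClosedFieldType) a b (t : (vtx a b * vtx a b) * bool) (j : 'I_b) : C :=
  (j == t.1.1.2)%:R - sg C t.2 * (j == t.1.2.2)%:R.

Definition Ap (C : numClosedFieldType) a b (p : vtx a b * vtx a b) z : C :=
  del C p.1 z - del C p.2 z.

Lemma conj_sg (C : numClosedFieldType) s : (sg C s)^* = sg C s.
Proof. by case: s; rewrite /sg /= ?rmorphN rmorph1. Qed.

Lemma conj_vv (C : numClosedFieldType) a b t i : (vv C (a:=a) (b:=b) t i)^* = vv C t i.
Proof. by rewrite /vv rmorphD rmorphM /= conj_sg !conjC_nat. Qed.

Lemma conj_ww (C : numClosedFieldType) a b t i : (ww C (a:=a) (b:=b) t i)^* = ww C t i.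
Proof. by rewrite /ww rmorphB rmorphM /= conj_sg !conjC_nat. Qed.

Lemma delE (C : numClosedFieldType) a b (x z : vtx a b) :
  del C x z = (z.1 == x.1)%:R * (z.2 == x.2)%:R.
Proof. by case: x z => [i j] [k l]; rewrite /del xpair_eqE -natrM mulnb. Qed.

Lemma hG (C : numClosedFieldType) a b t (z : vtx a b) :
  vv C t z.1 * ww C t z.2 = Ap C t.1 z + sg C t.2 * Ap C (swp t.1) z.
Proof.
case: t => [[[i j] [k l]] s]; rewrite /vv /ww /Ap /= !delE /=.
by case: s; rewrite /sg; ring.
Qed.

Lemma kron_outer (C : numClosedFieldType) a b (f : 'I_a -> C) (g : 'I_b -> C) :
  kron (outer f) (outer g) =
  grid_mx (fun x y => (f x.1 * g x.2) * (f y.1 * g y.2)^*).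
Proof. by apply: grid_ext => x y; rewrite !mxE rmorphM /=; ring. Qed.

Unset Implicit Arguments. Set Strict Implicit.

Theorem mainTheorem8 (C : numClosedFieldType) (a b : nat) (e : rel (vtx a b)) :
  simple_graph e ->
  (exists x y, e x y) ->
  pair_symmetric e ->
  separable (rho C e).
Proof.
move=> sgr [x [y exy]] ps.
have m0 : (two_m e)%:R != 0 :> C.
  rewrite pnatr_eq0 -lt0n; apply/card_gt0P; exists (x, y); by rewrite inE.
pose K : C := ((two_m e)%:R)^-1 / 8.
pose cc (t : (vtx a b * vtx a b) * bool) : C := K * (e t.1.1 t.1.2)%:R.
refine (@sep_sum C a b _ cc (@vv C a b) (@ww C a b) (rho C e) x.1 x.2 _ _ _).
- move=> t; apply: mulr_ge0; last exact: ler0n.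
  by apply: divr_ge0; [rewrite invr_ge0 ler0n | exact: ler0n].
- rewrite /rho mxtraceZ /laplacian grid_tr.
  under eq_bigr do rewrite eqxx deg_sum.
  by rewrite pair_bigA /= -twom_sum mulVf.
rewrite /rho /laplacian grid_mxZ.
under [RHS]eq_bigr do rewrite kron_outer grid_mxZ.
rewrite grid_mx_sum; apply: grid_ext => z z'.
under eq_bigr do rewrite rmorphM /= conj_vv conj_ww !hG.
have pb : forall G : (vtx a b * vtx a b) * bool -> C,
    \sum_t G t = \sum_p \sum_s G (p, s).
  by move=> G; rewrite pair_bigA; apply: eq_bigr => -[].
rewrite pb /=.
pose X p := Ap C p z * Ap C p z'.
transitivity (K * 2 * (\sum_p (e p.1 p.2)%:R * X p + \sum_p (e p.1 p.2)%:R * X (swp p))); last first.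
  rewrite -big_split /= mulr_sumr; apply: eq_bigr => p _.
  rewrite big_bool /= /cc /sg /X /=; ring.
have -> : \sum_p (e p.1 p.2)%:R * X (swp p) = \sum_p (e p.1 p.2)%:R * X p.
  rewrite [RHS](reindex_inj (can_inj (@sigK a b))) /=.
  by apply: eq_bigr => p _; rewrite e_sig.
have -> : \sum_p (e p.1 p.2)%:R * X p =
   \sum_x0 \sum_y0 (e x0 y0)%:R * ((del C x0 z - del C y0 z) * (del C x0 z' - del C y0 z')).
  by rewrite pair_bigA.
rewrite comb // /K.
set L := (if _ then _ else _).
field.
exact: m0.
Qed.
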